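(* Let $f \in \mathrm{Inj}(\Omega)$ and $h \in \mathrm{Fin}(\Omega)$. Then $(f)\mathrm{C}_{\mathrm{open}} = (hf)\mathrm{C}_{\mathrm{open}}$ and $(f)\mathrm{C}_{\mathrm{open}} = (fh)\mathrm{C}_{\mathrm{open}}$.
   Context: $\Omega$ is a countably infinite set; maps are written on the right and composed left to right ($(\alpha)fg=((\alpha)f)g$). $\mathrm{Inj}(\Omega)$ is the monoid of injective maps $\Omega\to\Omega$; $\mathrm{Fin}(\Omega)$ the group of permutations of $\Omega$ moving only finitely many points. For $f\in\mathrm{Inj}(\Omega)$, a cycle of $f$ is a nonempty $\Sigma\subseteq\Omega$ such that (a) for all $\alpha\in\Omega$, $(\alpha)f\in\Sigma$ iff $\alpha\in\Sigma$, and (b) no proper nonempty subset of $\Sigma$ satisfies (a). A forward cycle is an infinite cycle $\Sigma$ with $\Sigma\setminus(\Omega)f\ne\emptyset$; an open cycle is an infinite cycle that is not forward. $(f)\mathrm{C}_{\mathrm{open}}$ is the number of open cycles of $f$. *)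

(* Defs.v *)
From Stdlib Require Import List.
Set Implicit Arguments.

(* Omega is modelled as an arbitrary type equipped with a bijection to nat
   (i.e. a countably infinite set). Maps are ordinary functions; the paper's
   left-to-right composition (alpha)hf = ((alpha)h)f is written explicitly. *)

Definition bijective_map {A B : Type} (e : A -> B) : Prop :=
  exists g : B -> A, (forall a, g (e a) = a) /\ (forall b, e (g b) = b).

Definition countably_infinite (T : Type) : Prop :=
  exists e : T -> nat, bijective_map e.

Definition injective_map {T : Type} (f : T -> T) : Prop :=
  forall x y, f x = f y -> x = y.

Definition finitary_perm {T : Type} (h : T -> T) : Prop :=
  bijective_map h /\ exists l : list T, forall x, h x <> x -> In x l.

Definition lrcomp {T : Type} (f g : T -> T) : T -> T := fun a => g (f a).

Definition finite_set {T : Type} (S : T -> Prop) : Prop :=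
  exists l : list T, forall x, S x -> In x l.

Definition f_closed {T : Type} (f : T -> T) (S : T -> Prop) : Prop :=
  forall a, S (f a) <-> S a.

Definition is_cycle {T : Type} (f : T -> T) (S : T -> Prop) : Prop :=
  (exists x, S x) /\ f_closed f S /\
  (forall S' : T -> Prop, (forall x, S' x -> S x) -> (exists x, S' x) ->
     f_closed f S' -> forall x, S x -> S' x).

Definition forward_cycle {T : Type} (f : T -> T) (S : T -> Prop) : Prop :=
  is_cycle f S /\ ~ finite_set S /\ exists x, S x /\ forall y, f y <> x.

Definition open_cycle {T : Type} (f : T -> T) (S : T -> Prop) : Prop :=
  is_cycle f S /\ ~ finite_set S /\ ~ forward_cycle f S.

(* Equality of cardinal numbers of two families of subsets:
   a bijection between the corresponding subtypes. *)
Definition same_card {T : Type} (P Q : (T -> Prop) -> Prop) : Prop :=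
  exists F : {S | P S} -> {S | Q S}, bijective_map F.

(* Main.v *)
Require Import Defs.
From Stdlib Require Import Setoid List Arith Lia Classical ClassicalEpsilon FunctionalExtensionality PropExtensionality ProofIrrelevance FinFun.

Set Implicit Arguments. Unset Strict Implicit.
Section G.
Variable T : Type.

Fixpoint it (f : T -> T) (n : nat) (x : T) : T :=
  match n with 0 => x | S n => f (it f n x) end.

Lemma it_add f a b x : it f (a + b) x = it f a (it f b x).
Proof. induction a; simpl; congruence. Qed.

Lemma it_S' f n x : it f (S n) x = it f n (f x).
Proof. replace (S n) with (n + 1) by lia. rewrite it_add. reflexivity. Qed.

Lemma it_comm f a b x : it f a (it f b x) = it f b (it f a x).
Proof. rewrite <- !it_add. f_equal. lia. Qed.

Lemma it_inj f (Hf : injective_map f) n x y : it f n x = it f n y -> x = y.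
Proof. induction n; simpl; auto. Qed.

Definition conn f x y := exists m n, it f m x = it f n y.

Lemma conn_refl f x : conn f x x.
Proof. exists 0, 0; reflexivity. Qed.

Lemma conn_sym f x y : conn f x y -> conn f y x.
Proof. intros [m [n H]]. exists n, m; auto. Qed.

Lemma conn_trans f x y z : conn f x y -> conn f y z -> conn f x z.
Proof.
  intros [a [b H1]] [c [d H2]]. exists (c + a), (b + d).
  rewrite !it_add, H1, it_comm, H2. reflexivity.
Qed.

Lemma conn_f f x y : conn f x (f y) <-> conn f x y.
Proof.
  split; intros [m [n H]].
  - exists m, (S n). rewrite it_S'. auto.
  - exists (S m), n. rewrite <- it_S'. simpl. congruence.
Qed.

Lemma closed_it f S (H : f_closed f S) n a : S (it f n a) <-> S a.
Proof. induction n; simpl. tauto. etransitivity; [apply H|exact IHn]. Qed.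

Lemma L1a f x : is_cycle f (conn f x).
Proof.
  split; [exists x; apply conn_refl|split].
  - intro a. apply conn_f.
  - intros S' Hs [y Hy] Hc z Hz.
    assert (conn f y z) as [m [n H]] by (eapply conn_trans; [apply conn_sym, Hs, Hy| exact Hz]).
    apply (@closed_it _ _ Hc n). rewrite <- H. apply (@closed_it _ _ Hc m). auto.
Qed.

Lemma L1b f S (H : is_cycle f S) x (Hx : S x) y : S y <-> conn f x y.
Proof.
  destruct H as [_ [Hc Hm]].
  assert (K : forall y, conn f x y -> S y).
  { intros z [m [n E]]. apply (@closed_it _ _ Hc n). rewrite <- E. apply (@closed_it _ _ Hc m). auto. }
  split; auto. intro Hy. apply (Hm (conn f x)); auto.
  - exists x. apply conn_refl.
  - intro a. apply conn_f.
Qed.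

Definition Open f x := (forall k, it f (S k) x <> x) /\ forall n, exists w, it f n w = x.

Lemma it_mod f x k (Hk : it f (S k) x = x) q : it f q x = it f (q mod (S k)) x.
Proof.
  rewrite (Nat.div_mod_eq q (S k)) at 1.
  rewrite Nat.add_comm, it_add. f_equal.
  generalize (q / S k). intro j. induction j.
  - rewrite Nat.mul_0_r. reflexivity.
  - replace (S k * S j) with (S k + S k * j) by lia. rewrite it_add, IHj. auto.
Qed.

Lemma it_mul f x k (Hk : it f (S k) x = x) j : it f (j * S k) x = x.
Proof.
  induction j. reflexivity.
  replace (S j * S k) with (S k + j * S k) by lia. rewrite it_add, IHj. auto.
Qed.

Lemma pigeon f x (Hf : injective_map f) (Hnp : forall k, it f (S k) x <> x) l :
  ~ (forall n, In (it f n x) l).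
Proof.
  intro H.
  assert (forall n, NoDup (map (fun i => it f i x) (seq 0 n))).
  { intro n. apply FinFun.Injective_map_NoDup; [|apply seq_NoDup].
    intros i j E.
    assert (forall a b, a < b -> it f a x <> it f b x).
    { intros a b Hab E'. apply (Hnp (b - a - 1)).
      apply (@it_inj _ Hf a). rewrite <- it_add.
      replace (a + S (b - a - 1)) with b by lia. auto. }
    destruct (lt_eq_lt_dec i j) as [[|]|]; auto.
    - exfalso; eapply H0; eauto.
    - exfalso; eapply H0; eauto. }
  specialize (NoDup_incl_length (H0 (S (length l))) (l' := l)).
  rewrite length_map, length_seq. intro HH.
  assert (S (length l) <= length l); [|lia].
  apply HH. intros y Hy. apply in_map_iff in Hy. destruct Hy as [i [<- _]]. auto.
Qed.

Lemma open_pre f (Hf : injective_map f) x y (Ho : Open f x) : conn f x y -> exists w, f w = y.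
Proof.
  intros [m [n E]]. destruct Ho as [_ Hp]. destruct (Hp (S n)) as [w Hw].
  exists (it f m w). apply (@it_inj _ Hf n). rewrite <- E, <- Hw.
  change (f (it f m w)) with (it f (S m) w).
  rewrite <- !it_add. f_equal. lia.
Qed.

Lemma L2a f (Hf : injective_map f) P (H : open_cycle f P) x (Hx : P x) : Open f x.
Proof.
  destruct H as [Hc [Hinf Hnf]].
  assert (Hpre : forall z, P z -> exists y, f y = z).
  { intros z Hz. apply NNPP. intro C. apply Hnf. split; auto. split; auto.
    exists z. split; auto. intros y Hy. apply C. eauto. }
  split.
  - intros k Hk. apply Hinf.
    exists (map (fun i => it f i x) (seq 0 (S k))). intros y Hy.
    apply (L1b Hc Hx) in Hy. destruct Hy as [m [n E]].
    apply in_map_iff. exists ((m + n * S k - n) mod S k). split.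
    + rewrite <- it_mod by auto. apply (@it_inj _ Hf n). rewrite <- it_add.
      replace (n + (m + n * S k - n)) with (m + n * S k) by lia.
      rewrite it_add, <- E. rewrite (it_mul Hk). reflexivity.
    + apply in_seq. pose proof (Nat.mod_upper_bound (m + n * S k - n) (S k) ltac:(lia)). lia.
  - intro n. induction n. exists x; reflexivity.
    destruct IHn as [w Hw].
    assert (P w) by (apply (L1b Hc Hx); exists 0, n; auto).
    destruct (Hpre w H) as [y Hy]. exists y. rewrite it_S', Hy. auto.
Qed.

Lemma L2b f (Hf : injective_map f) x (Ho : Open f x) : open_cycle f (conn f x).
Proof.
  split; [apply L1a|split].
  - intros [l Hl]. apply (pigeon Hf (proj1 Ho) (l := l)). intro n. apply Hl.
    exists n, 0. reflexivity.
  - intros [_ [_ [z [Hz Hn]]]]. destruct (open_pre Hf Ho Hz) as [w Hw]. eapply Hn; eauto.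
Qed.

Definition Safe f (E : list T) t := forall n w, it f (S n) w = t -> ~ In w E.

Lemma depth_uniq f x (Hnp : forall k, it f (S k) x <> x) e a b :
  it f a e = x -> it f b e = x -> a = b.
Proof.
  assert (forall a b, a < b -> it f a e = x -> it f b e = x -> False).
  { intros a0 b0 Hab E1 E2. apply (Hnp (b0 - a0 - 1)).
    rewrite <- E1 at 1. rewrite <- it_add.
    replace (S (b0 - a0 - 1) + a0) with b0 by lia. congruence. }
  intros. destruct (lt_eq_lt_dec a b) as [[|]|]; auto; exfalso; eauto.
Qed.

Lemma claimB f (Hf : injective_map f) x (Ho : Open f x) E : exists t, conn f x t /\ Safe f E t.
Proof.
  assert (exists N, forall e, In e E -> forall d, it f d e = x -> d <= N) as [N HN].
  { induction E as [|e E IH]. exists 0. intros e [].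
    destruct IH as [N HN].
    destruct (classic (exists d, it f d e = x)) as [[d0 Hd0]|Hno].
    - exists (max N d0). intros e' [<-|Hi] d Hd.
      + rewrite (depth_uniq (proj1 Ho) Hd Hd0). lia.
      + specialize (HN e' Hi d Hd). lia.
    - exists N. intros e' [<-|Hi] d Hd. exfalso; eauto. eauto. }
  destruct (proj2 Ho N) as [w Hw]. exists w. split.
  - exists 0, N. auto.
  - intros n v Hv Hi.
    assert (H : it f (N + S n) v = x) by (rewrite it_add, Hv; auto).
    specialize (HN v Hi _ H). lia.
Qed.

Lemma A0 f g E (Hag : forall a, ~ In a E -> f a = g a) n w :
  (forall i, i < n -> ~ In (it f i w) E) -> it f n w = it g n w.
Proof.
  induction n; simpl; auto. intro H.
  rewrite <- IHn by auto. apply Hag. auto.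
Qed.

Lemma A1 f g E (Hag : forall a, ~ In a E -> f a = g a) t (Hs : Safe f E t) n w :
  it f n w = t -> it g n w = t.
Proof.
  intro H. rewrite <- (A0 Hag); auto. intros i Hi.
  apply (Hs (n - 1 - i)). rewrite <- it_add. rewrite <- H. f_equal. lia.
Qed.

Lemma A2 f g E (Hag : forall a, ~ In a E -> f a = g a) (Hg : injective_map g) t :
  Open f t -> Safe f E t -> Open g t /\ Safe g E t.
Proof.
  intros [Hnp Hp] Hs. split; [split|].
  - intros k Hk. destruct (Hp (S k)) as [w Hw].
    pose proof (A1 Hag Hs Hw). rewrite <- Hk in H. apply (@it_inj _ Hg) in H.
    subst w. exact (Hnp k Hw).
  - intro n. destruct (Hp n) as [w Hw]. exists w. eapply A1; eauto.
  - intros n v Hv Hi. destruct (Hp (S n)) as [w Hw].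
    pose proof (A1 Hag Hs Hw). rewrite <- Hv in H. apply (@it_inj _ Hg) in H.
    subst w. eapply Hs; eauto.
Qed.

Lemma conn_dir f (Hf : injective_map f) a b : conn f a b ->
  exists k, a = it f k b \/ b = it f k a.
Proof.
  intros [m [n H]]. destruct (le_lt_dec m n).
  - exists (n - m). left. apply (@it_inj _ Hf m). rewrite <- it_add, H. f_equal. lia.
  - exists (m - n). right. apply (@it_inj _ Hf n). rewrite <- it_add, <- H. f_equal. lia.
Qed.

Lemma claimC f g E (Hag : forall a, ~ In a E -> f a = g a) (Hf : injective_map f) t1 t2 :
  Safe f E t1 -> Safe f E t2 -> conn f t1 t2 -> conn g t1 t2.
Proof.
  intros S1 S2 Hc. destruct (conn_dir Hf Hc) as [k [H|H]].
  - exists 0, k. simpl. symmetry. eapply A1; eauto.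
  - exists k, 0. simpl. eapply A1; eauto.
Qed.

Definition Rel f E (S S' : T -> Prop) := exists t, S t /\ S' t /\ Safe f E t /\ Open f t.

Lemma tot f g E (Hag : forall a, ~ In a E -> f a = g a) (Hf : injective_map f) (Hg : injective_map g) S :
  open_cycle f S -> exists S', open_cycle g S' /\ Rel f E S S'.
Proof.
  intro H. destruct H as [Hc Hr] eqn:HH. destruct (proj1 Hc) as [x Hx].
  pose proof (L2a Hf H Hx) as Ho. destruct (claimB Hf Ho E) as [t [Ht Hs]].
  assert (St : S t) by (apply (L1b Hc Hx); auto).
  pose proof (L2a Hf H St) as Hot.
  destruct (A2 Hag Hg Hot Hs) as [Og Sg].
  exists (conn g t). split. apply L2b; auto.
  exists t. split; [auto|split; [apply conn_refl|split; auto]].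
Qed.

Lemma uniq f g E (Hag : forall a, ~ In a E -> f a = g a) (Hf : injective_map f) S S1 S2 :
  open_cycle f S -> open_cycle g S1 -> open_cycle g S2 -> Rel f E S S1 -> Rel f E S S2 -> S1 = S2.
Proof.
  intros H H1 H2 [t1 [A1' [B1 [C1 _]]]] [t2 [A2' [B2 [C2 _]]]].
  assert (conn f t1 t2) by (apply (L1b (proj1 H) A1'); auto).
  assert (Hg : conn g t1 t2) by (eapply claimC; eauto).
  apply functional_extensionality. intro y. apply propositional_extensionality.
  rewrite (L1b (proj1 H1) B1), (L1b (proj1 H2) B2). split; intro.
  - eapply conn_trans; [apply conn_sym, Hg|]; auto.
  - eapply conn_trans; eauto.
Qed.

Lemma Rel_sym f g E (Hag : forall a, ~ In a E -> f a = g a) (Hg : injective_map g) S S' :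
  Rel f E S S' -> Rel g E S' S.
Proof.
  intros [t [A [B [C D]]]]. destruct (A2 Hag Hg D C). exists t; tauto.
Qed.

Lemma rel_bij {A B : Type} (R : A -> B -> Prop) :
  (forall a, exists b, R a b) -> (forall b, exists a, R a b) ->
  (forall a b b', R a b -> R a b' -> b = b') -> (forall a a' b, R a b -> R a' b -> a = a') ->
  exists F : A -> B, bijective_map F.
Proof.
  intros t1 t2 u1 u2.
  exists (fun a => proj1_sig (constructive_indefinite_description _ (t1 a))).
  exists (fun b => proj1_sig (constructive_indefinite_description _ (t2 b))).
  split.
  - intro a. destruct (constructive_indefinite_description _ (t1 a)) as [b Hb]; simpl.
    destruct (constructive_indefinite_description _ (t2 b)) as [a' Ha']; simpl. eauto.
  - intro b. destruct (constructive_indefinite_description _ (t2 b)) as [a Ha]; simpl.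
    destruct (constructive_indefinite_description _ (t1 a)) as [b' Hb']; simpl. eauto.
Qed.

Lemma sig_eq {P : (T -> Prop) -> Prop} (a b : {S | P S}) : proj1_sig a = proj1_sig b -> a = b.
Proof.
  destruct a, b; simpl; intro; subst. f_equal. apply proof_irrelevance.
Qed.

Lemma gen (f g : T -> T) (E : list T) (Hag : forall a, ~ In a E -> f a = g a) (Hf : injective_map f) (Hg : injective_map g) :
  same_card (open_cycle f) (open_cycle g).
Proof.
  assert (Hag' : forall a, ~ In a E -> g a = f a) by (intros; symmetry; auto).
  unfold same_card. apply (@rel_bij _ _ (fun (a : {S | open_cycle f S}) (b : {S | open_cycle g S}) =>
            Rel f E (proj1_sig a) (proj1_sig b))).
  - intros [S HS]. destruct (tot Hag Hf Hg HS) as [S' [H1 H2]].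
    exists (exist _ S' H1). auto.
  - intros [S HS]. destruct (tot Hag' Hg Hf HS) as [S' [H1 H2]].
    exists (exist _ S' H1). simpl. apply (Rel_sym Hag' Hf); auto.
  - intros [S HS] [S1 H1] [S2 H2]; simpl; intros. apply sig_eq; simpl.
    exact (uniq Hag Hf HS H1 H2 H H0).
  - intros [S1 H1] [S2 H2] [S HS]; simpl; intros. apply sig_eq; simpl.
    eapply (uniq Hag' Hg HS H1 H2); apply (Rel_sym Hag Hg); auto.
Qed.

End G.

Theorem mainTheorem7 (T : Type) (HT : countably_infinite T)
  (f h : T -> T) (Hf : injective_map f) (Hh : finitary_perm h) :
  same_card (open_cycle f) (open_cycle (lrcomp h f)) /\
  same_card (open_cycle f) (open_cycle (lrcomp f h)).
Proof.
  destruct Hh as [[hi [Hi1 Hi2]] [l Hl]].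
  assert (Hhi : injective_map h) by (intros x y E; rewrite <- (Hi1 x), <- (Hi1 y), E; auto).
  assert (Hfix : forall a, ~ In a l -> h a = a).
  { intros a Ha. apply NNPP. intro C. apply Ha. apply Hl. auto. }
  split.
  - apply (gen (E := l)); auto.
    + intros a Ha. unfold lrcomp. rewrite Hfix; auto.
    + intros x y E. unfold lrcomp in E. apply Hhi, Hf. auto.
  - assert (exists E, forall a, In (f a) l -> In a E) as [E HE].
    { clear Hl Hfix. induction l as [|y l IH]. exists nil. intros a [].
      destruct IH as [E HE].
      destruct (classic (exists a, f a = y)) as [[a0 Ha0]|Hno].
      - exists (a0 :: E). intros a [Ha|Ha]; [left; apply Hf; congruence|right; auto].
      - exists E. intros a [Ha|Ha]; auto. exfalso; eauto. }
    apply (gen (E := E)); auto.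
    + intros a Ha. unfold lrcomp. rewrite Hfix; auto.
    + intros x y E'. unfold lrcomp in E'. apply Hf, Hhi. auto.
Qed.
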